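(* Consider the optimization problem: for every total allocated bandwidth $W\in(0,W_{tot}]$, choose the bandwidths $w_u>0$ and transmit powers $p_u$ of the users $u\in\mathcal{U}$ so as to maximize the energy efficiency $\textit{EE}=\frac{\sum_{u\in\mathcal{U}} T_u\,\mathbb{P}(C_u\ge T_u)}{\sum_{u\in\mathcal{U}} p_u}$, subject to (1) $p_u=\frac{gN_0\Gamma}{\ell_u}\left(2^{T_u/w_u}-1\right)w_u$ for every $u$, and (2) $\sum_{u\in\mathcal{U}} w_u=W$. The solution of this problem requires that, for the set of users experiencing the same attenuation $\ell_u$, the bandwidth $w_u$ is proportional to the traffic demand $T_u$, and as a result the power spectral density $\delta p_u\triangleq \frac{p_u}{w_u}$ is constant among these users.
   Context: Single-cell downlink OFDMA model: a base station serves a set $\mathcal{U}$ of $N_U$ users, user $u$ having data rate demand $T_u$, allocated bandwidth $w_u$ and dedicated transmit power $p_u$, with total power and bandwidth budgets $P_{tot}$ and $W_{tot}$. The user capacity is $C_u=w_u\log_2\!\left(1+\frac{1}{\Gamma}\frac{p_u h_f \ell_u}{w_u N_0}\right)$, where $\Gamma$ is the SNR gap, $N_0$ the noise power spectral density, $\ell_u$ the deterministic path-loss attenuation (known at the base station), and $h_f$ is Rayleigh fading, i.e. exponentially distributed with mean $1/\tau$. Requiring the success probability $\mathbb{P}(C_u\ge T_u)$ to equal a threshold $0<c<1$ gives the minimum required power $p_u=\frac{gN_0\Gamma}{\ell_u}\left(2^{T_u/w_u}-1\right)w_u$ with $g\triangleq \frac{\tau}{\ln(1/c)}>0$. *)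

(* Defs.v *)
From HB Require Import structures.
From mathcomp Require Import all_boot all_order all_algebra.
From mathcomp Require Import all_classical all_reals all_analysis.
Set Implicit Arguments. Unset Strict Implicit. Unset Printing Implicit Defensive.
Import Order.TTheory GRing.Theory Num.Theory.
Local Open Scope classical_set_scope.
Local Open Scope ring_scope.

Section OFDMA.
Context {R : realType}.

Definition log2 (x : R) : R := ln x / ln 2.

Definition gfac (tau c : R) : R := tau / ln (c^-1).

(* user capacity C_u = w log2(1 + (1/Gamma) p h l / (w N0)) for fading value h *)
Definition capacity (Gam N0 l w p h : R) : R :=
  w * log2 (1 + Gam^-1 * (p * h * l / (w * N0))).

(* success probability P(C_u >= T_u), h_f ~ exponential with rate tau (mean 1/tau) *)
Definition succ_prob (tau Gam N0 l T w p : R) : R :=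
  fine (exponential_prob tau [set h : R | T <= capacity Gam N0 l w p h]).

Definition req_power (g N0 Gam l T w : R) : R :=
  g * N0 * Gam / l * (2 `^ (T / w) - 1) * w.

Variable U : finType.

Definition EE (tau c N0 Gam : R) (l T w : U -> R) : R :=
  (\sum_(u : U) T u * succ_prob tau Gam N0 (l u) (T u) (w u)
       (req_power (gfac tau c) N0 Gam (l u) (T u) (w u)))
  / (\sum_(u : U) req_power (gfac tau c) N0 Gam (l u) (T u) (w u)).

Definition feasible (W : R) (w : U -> R) : Prop :=
  (forall u, 0 < w u) /\ \sum_(u : U) w u = W.

Definition optimal (tau c N0 Gam W : R) (l T w : U -> R) : Prop :=
  feasible W w /\
  forall w' : U -> R, feasible W w' -> EE tau c N0 Gam l T w' <= EE tau c N0 Gam l T w.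

End OFDMA.

(* Main.v *)
Require Import Defs.
From HB Require Import structures.
From mathcomp Require Import all_boot all_order all_algebra.
From mathcomp Require Import all_classical all_reals all_analysis.
From mathcomp Require Import ring lra.
Import Order.TTheory GRing.Theory Num.Theory.
Local Open Scope classical_set_scope.
Local Open Scope ring_scope.

Lemma expprob_pos (R : realType) (tau x0 : R) : 0 < tau -> 0 < x0 ->
  (0 < fine (exponential_prob tau [set h : R | x0 <= h]))%R.
Proof.
move=> ht hx.
pose P := exponential_distribution_exponential_prob__canonical__probability_measure_Probability ht.
have -> : [set h : R | x0 <= h] = `[x0, +oo[%classic.
  by apply/seteqP; split => x /=; rewrite in_itv /= andbT.
have mS : measurable (`[x0, +oo[%classic : set R) by [].
have hC : (~` `[x0, +oo[%classic) `<=` (`]-oo, 0[%classic `|` `[0, x0]%classic : set R).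
  move=> x /=; rewrite !in_itv /= andbT => /negP; rewrite -ltNge => xl.
  case: (ltP x 0) => x0'; [by left|by right; rewrite (ltW xl)].
have P0 : P `]-oo, 0[%classic = 0%E.
  rewrite /P /= /exponential_prob integral0_eq // => x /=; rewrite in_itv /= => xl.
  by rewrite lt0_exponential_pdf.
have P1 : P `[0, x0]%classic = (1 - (expR (- tau * x0))%:E)%E.
  exact: exponential_prob_itv0c.
have leC : (P (~` `[x0, +oo[%classic) <= 1 - (expR (- tau * x0))%:E)%E.
  have mC : (~` `[x0, +oo[%classic : set R) \in measurable by rewrite inE; apply: measurableC.
  have mU : (`]-oo, 0[%classic `|` `[0, x0]%classic : set R) \in measurable by rewrite inE; apply: measurableU.
  apply: (le_trans (le_measure P mC mU hC)).
  apply: (le_trans (measureU2 _ _ _)) => //. rewrite [X in (X + _)%E]P0 [X in (_ + X)%E]P1 add0e //.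
have eS : P `[x0, +oo[%classic = (1 - P (~` `[x0, +oo[%classic))%E.
  by rewrite -probability_setC ?setCK //; apply: measurableC.
have fC : P (~` `[x0, +oo[%classic) \is a fin_num by rewrite fin_num_measure //; apply: measurableC.
move: leC eS; rewrite -(fineK fC); set r := fine _ => leC eS.
change (0 < fine (P `[x0, +oo[%classic)); rewrite eS /= .
rewrite lee_fin in leC.
have := expR_gt0 (- tau * x0); lra.
Qed.

Lemma conv_key (R : realType) (c Tu Tv wu wv : R) : 0 < c -> 0 < wu -> 0 < wv ->
  Tu / wu != Tv / wv ->
  (wu + wv) * (expR ((Tu + Tv) / (wu + wv) * c) - 1) <
  wu * (expR (Tu / wu * c) - 1) + wv * (expR (Tv / wv * c) - 1).
Proof.
move=> c0 wu0 wv0 hne.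
set X := (Tu + Tv) / (wu + wv); set xu := Tu / wu; set xv := Tv / wv.
have hu : wu * xu = Tu by rewrite /xu mulrC -mulrA mulVf ?mulr1 // gt_eqF.
have hv : wv * xv = Tv by rewrite /xv mulrC -mulrA mulVf ?mulr1 // gt_eqF.
have hX : (wu + wv) * X = Tu + Tv.
  by rewrite /X mulrC -mulrA mulVf ?mulr1 // gt_eqF // addr_gt0.
have Eu : expR (xu * c) = expR (X * c) * expR ((xu - X) * c).
  by rewrite -expRD; congr expR; ring.
have Ev : expR (xv * c) = expR (X * c) * expR ((xv - X) * c).
  by rewrite -expRD; congr expR; ring.
have nu : xu != X.
  apply/negP => /eqP exu; move/negP: hne; apply; apply/eqP.
  rewrite -/xu -/xv exu.
  have : wv * xv = wv * X by move: hu hv hX; rewrite exu; lra.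
  by move/mulfI => -> //; rewrite gt_eqF.
have su : 1 + (xu - X) * c < expR ((xu - X) * c).
  by apply: expR_gt1Dx; apply: mulf_neq0; [rewrite subr_eq0 | rewrite gt_eqF].
have sv := expR_ge1Dx ((xv - X) * c).
have EX := expR_gt0 (X * c).
rewrite Eu Ev.
move: su sv; set a := expR ((xu - X) * c); set b := expR ((xv - X) * c) => su sv.
have key : wu + wv < wu * a + wv * b.
  have h1 : wu * (1 + (xu - X) * c) < wu * a by rewrite ltr_pM2l.
  have h2 : wv * (1 + (xv - X) * c) <= wv * b by rewrite ler_pM2l.
  have : wu * (1 + (xu - X) * c) + wv * (1 + (xv - X) * c) = wu + wv.
    have : wu * xu + wv * xv - (wu + wv) * X = 0 by rewrite hu hv hX; ring.
    move=> e; transitivity (wu + wv + c * (wu * xu + wv * xv - (wu + wv) * X)); first ring.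
    by rewrite e mulr0 addr0.
  lra.
have : expR (X * c) * (wu + wv) < expR (X * c) * (wu * a + wv * b) by rewrite ltr_pM2l.
lra.
Qed.

Lemma set_eq (R : realType) (g N0 Gam l T w : R) : 0 < g -> 0 < N0 -> 0 < Gam ->
  0 < l -> 0 < T -> 0 < w ->
  [set h : R | T <= capacity Gam N0 l w (req_power g N0 Gam l T w) h] =
  [set h : R | g^-1 <= h].
Proof.
move=> g0 N00 Gam0 l0 T0 w0.
have ln2 : 0 < ln (2 : R) by apply: ln_gt0; lra.
have E2 : (2 : R) `^ (T / w) = expR (T / w * ln 2) by rewrite /powR gt_eqF.
set t := T / w * ln 2.
have t0 : 0 < t by rewrite /t mulr_gt0 // divr_gt0.
set a := 2 `^ (T / w) - 1.
have ha : 0 < a by rewrite /a E2 subr_gt0 expR_gt1.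
apply/seteqP; split => h /=; rewrite /capacity /req_power /log2 -/a;
  (have -> : Gam^-1 * (g * N0 * Gam / l * a * w * h * l / (w * N0)) = g * a * h
    by field; rewrite ?gt_eqF //; apply/andP; split; rewrite gt_eqF);
  set y := 1 + g * a * h.
- have hT : T = w * (t / ln 2) by rewrite /t mulfK ?gt_eqF // mulrC -mulrA mulVf ?mulr1 ?gt_eqF.
  rewrite [X in X <= _]hT ler_pM2l // ler_pM2r ?invr_gt0 //.
  have [y0|y0] := leP y 0.
    by rewrite ln0 //; lra.
  move=> hle; rewrite -ler_expR lnK ?posrE // /t -E2 /y in hle.
  have : a * 1 <= a * (g * h) by move: hle; rewrite /a; lra.
  rewrite ler_pM2l // => h1.
  by rewrite -[g^-1]mulr1 ler_pdivrMl.
- rewrite -[g^-1]mulr1 ler_pdivrMl // => h1.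
  have hT : T = w * (t / ln 2) by rewrite /t mulfK ?gt_eqF // mulrC -mulrA mulVf ?mulr1 ?gt_eqF.
  rewrite [X in X <= _]hT ler_pM2l // ler_pM2r ?invr_gt0 //.
  have y0 : 0 < y by rewrite /y; nra.
  rewrite -ler_expR lnK ?posrE // /t -E2 /y.
  have : a * 1 <= a * (g * h) by rewrite ler_pM2l.
  rewrite /a; lra.
Qed.

Lemma sum_diff2 (R : realType) (U : finType) (F G : U -> R) (u v : U) :
  u != v -> (forall x, x != u -> x != v -> F x = G x) ->
  \sum_(x : U) F x - \sum_(x : U) G x = (F u - G u) + (F v - G v).
Proof.
move=> uv H; rewrite -sumrB (bigD1 u) //= (bigD1 v) /=; last by rewrite eq_sym.
rewrite big1 ?addr0 // => x /andP[xu xv]; by rewrite H ?subrr.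
Qed.

Lemma sum_pos (R : realType) (U : finType) (F : U -> R) (u0 : U) :
  (forall x, 0 < F x) -> 0 < \sum_(x : U) F x.
Proof.
move=> H; rewrite (bigD1 u0) //=.
have : 0 <= \sum_(i | i != u0) F i by apply: sumr_ge0 => i _; exact: ltW.
have := H u0; lra.
Qed.

Lemma pow2E (R : realType) (x : R) : (2 : R) `^ x = expR (x * ln 2).
Proof. by rewrite /powR gt_eqF. Qed.

Theorem theorem1 (R : realType) (U : finType)
  (tau c N0 Gam Wtot W : R) (l T : U -> R)
  (htau : 0 < tau) (hc0 : 0 < c) (hc1 : c < 1)
  (hN0 : 0 < N0) (hGam : 0 < Gam)
  (hl : forall u, 0 < l u) (hT : forall u, 0 < T u)
  (hW0 : 0 < W) (hWtot : W <= Wtot)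
  (w : U -> R) :
  optimal tau c N0 Gam W l T w ->
  (forall l0 : R, exists k : R, forall u, l u = l0 -> w u = k * T u) /\
  (forall u v, l u = l v ->
     req_power (gfac tau c) N0 Gam (l u) (T u) (w u) / w u =
     req_power (gfac tau c) N0 Gam (l v) (T v) (w v) / w v).
Proof.
move=> [[wpos wsum] hopt].
have g0 : 0 < gfac tau c.
  by rewrite /gfac divr_gt0 // ln_gt0 // invf_gt1.
set g := gfac tau c in g0 hopt *.
set Pc := fine (exponential_prob tau [set h : R | g^-1 <= h]).
have Pc0 : 0 < Pc by apply: expprob_pos; rewrite // invr_gt0.
have EEe : forall w', feasible W w' -> EE tau c N0 Gam l T w' =
    (\sum_(u : U) T u * Pc) / \sum_(u : U) req_power g N0 Gam (l u) (T u) (w' u).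
  move=> w' [w'pos _]; rewrite /EE; congr (_ / _); apply: eq_bigr => x _.
  by rewrite /succ_prob set_eq.
have pwpos : forall u x, 0 < x -> 0 < req_power g N0 Gam (l u) (T u) x.
  move=> u x x0; rewrite /req_power pow2E.
  have h1 : 0 < g * N0 * Gam / l u by apply: divr_gt0 => //; apply: mulr_gt0 => //; apply: mulr_gt0.
  have h2 : 0 < expR (T u / x * ln 2) - 1.
    by rewrite subr_gt0 expR_gt1 mulr_gt0 ?divr_gt0 // ln_gt0 //; lra.
  by apply: mulr_gt0 => //; apply: mulr_gt0.
have key : forall u v, l u = l v -> T u / w u = T v / w v.
  move=> u v luv.
  case: (eqVneq (T u / w u) (T v / w v)) => // hne; exfalso.
  have uv : u != v by apply/eqP => e; move: hne; rewrite e eqxx.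
  have Tuv : 0 < T u + T v by have := hT u; have := hT v; lra.
  have wuv : 0 < w u + w v by have := wpos u; have := wpos v; lra.
  set s := (w u + w v) / (T u + T v).
  have s0 : 0 < s by rewrite divr_gt0.
  pose w' := fun x => if x == u then T u * s else if x == v then T v * s else w x.
  have w'pos : forall x, 0 < w' x.
    have hTs : forall y, 0 < T y * s by move=> y; apply: mulr_gt0.
    by move=> x; rewrite /w'; case: ifP => _; [|case: ifP => _].
  have w'u : w' u = T u * s by rewrite /w' eqxx.
  have w'v : w' v = T v * s by rewrite /w' eq_sym (negbTE uv) eqxx.
  have w'o : forall x, x != u -> x != v -> w' x = w x.
    by move=> x xu xv; rewrite /w' (negbTE xu) (negbTE xv).
  have ss : (T u + T v) * s = w u + w v.
    by rewrite /s mulrC -mulrA mulVf ?mulr1 // gt_eqF.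
  have fw' : feasible W w'.
    split => //; apply/eqP; rewrite -subr_eq0 -wsum; apply/eqP.
    rewrite (@sum_diff2 _ _ w' w u v uv w'o) w'u w'v; lra.
  pose D := fun (z : U -> R) => \sum_(x : U) req_power g N0 Gam (l x) (T x) (z x).
  have Dlt : D w' < D w.
    rewrite -subr_lt0 /D (@sum_diff2 _ _ (fun x => req_power g N0 Gam (l x) (T x) (w' x)) (fun x => req_power g N0 Gam (l x) (T x) (w x)) u v uv); last first.
      by move=> x xu xv; rewrite w'o.
    rewrite w'u w'v /req_power !pow2E luv.
    set K := g * N0 * Gam / l v.
    have K0 : 0 < K by apply: divr_gt0 => //; apply: mulr_gt0 => //; apply: mulr_gt0.
    have eu : T u / (T u * s) = (T u + T v) / (w u + w v).
      by rewrite invfM mulrA mulfV ?mul1r ?gt_eqF // invf_div.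
    have ev : T v / (T v * s) = (T u + T v) / (w u + w v).
      by rewrite invfM mulrA mulfV ?mul1r ?gt_eqF // invf_div.
    rewrite eu ev.
    have ln2 : 0 < ln (2 : R) by apply: ln_gt0; lra.
    have := @conv_key _ (ln 2) (T u) (T v) (w u) (w v) ln2 (wpos u) (wpos v) hne.
    set A := expR _ - 1; set Bu := expR _ - 1; set Bv := expR _ - 1 => hc.
    have : K * ((w u + w v) * A) < K * (w u * Bu + w v * Bv) by rewrite ltr_pM2l.
    rewrite -ss.
    have -> : K * ((T u + T v) * s * A) = K * A * (T u * s) + K * A * (T v * s) by ring.
    have -> : K * (w u * Bu + w v * Bv) = K * Bu * w u + K * Bv * w v by ring.
    lra.
  have Dpos : forall z, feasible W z -> 0 < D z.
    by move=> z [zpos _]; apply: (@sum_pos _ _ _ u) => x; apply: pwpos.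
  have N0' : 0 < \sum_(x : U) T x * Pc.
    by apply: (@sum_pos _ _ _ u) => x; apply: mulr_gt0.
  have := hopt w' fw'; rewrite (EEe _ fw') (EEe _ (conj wpos wsum)) -/(D w') -/(D w).
  have Dw0 := Dpos _ (conj wpos wsum); have Dw'0 := Dpos _ fw'.
  rewrite ler_pdivrMr // mulrAC ler_pdivlMr // ler_pM2l //.
  lra.
split.
- move=> l0; case: (pickP (fun x => l x == l0)) => [u0 /eqP hu0 | none].
    exists (w u0 / T u0) => u hu.
    have e := key u u0 (etrans hu (esym hu0)).
    have e' : w u / T u = w u0 / T u0 by rewrite -[LHS]invf_div -[RHS]invf_div e.
    by rewrite -e' divfK // gt_eqF.
  by exists 0 => u hu; move: (none u); rewrite hu eqxx.
- move=> u v luv.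
  rewrite /req_power !mulfK ?gt_eqF // luv (key u v luv) //.
Qed.
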